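(* Let $c:\mathcal J\to\mathbb Q$ be a consistent map. Then $\Phi_c(\pi(r))=\Omega(r)$ for all $r\in\mathbb Q^\times$ (i.e., $\Phi_c$ extends $\Omega$) if and only if $c(\mathbb Q,p)=-1$ for every non-Archimedean place (prime) $p$ of $\mathbb Q$.
   Context: Let $\overline{\mathbb Q}$ be an algebraic closure of $\mathbb Q$, $A$ the ring of algebraic integers, $\mathcal S=\overline{\mathbb Q}^\times/A^\times$ (a $\mathbb Q$-vector space, written multiplicatively with scalar action $\alpha\mapsto\alpha^r$), and $\pi:\overline{\mathbb Q}^\times\to\mathcal S$ the canonical map. $\Omega:\mathbb Q^\times\to\mathbb Z$ is the unique group homomorphism with $\Omega(p)=1$ for every prime $p$ (and $\Omega(-1)=0$), which is well defined on $\pi(\mathbb Q^\times)$. For a number field $K$ and non-Archimedean place $v$ of $K$, $p_v$ is the prime below $v$, $K_v$ the completion, and $\|\cdot\|_v$ the extension to $K_v$ of the $p_v$-adic absolute value on $\mathbb Q_{p_v}$. Let $\mathcal H_K=\pi(K^\times)$, $\mathcal S_K=\{\alpha\in\mathcal S:\alpha^n\in\mathcal H_K\text{ for some }n\in\mathbb N\}$, and $\|\alpha\|_v=\|\alpha^n\|_v^{1/n}$ for $\alpha\in\mathcal S_K$ with $\alpha^n\in\mathcal H_K$. Let $\mathcal J=\{(K,v)\}$ be the set of pairs of a number field and a non-Archimedean place of it. A map $c:\mathcal J\to\mathbb Q$ is consistent if $c(K,v)=\sum_{w\mid v}c(L,w)$ for all number fields $K$, finite extensions $L/K$ and non-Archimedean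 places $v$ of $K$. For consistent $c$, $\Phi_c:\mathcal S\to\mathbb Q$ is $\Phi_c(\alpha)=\sum_{v}\frac{c(K,v)}{\log p_v}\log\|\alpha\|_v$ over non-Archimedean places of any number field $K$ with $\alpha\in\mathcal S_K$ (independent of $K$). *)

(* Defs.v *)
From HB Require Import structures.
From mathcomp Require Import all_boot all_order all_algebra.
From mathcomp Require Import algC.
From mathcomp Require Import all_classical all_reals.
From mathcomp Require Import exp.
Set Implicit Arguments. Unset Strict Implicit. Unset Printing Implicit Defensive.
Import Order.TTheory GRing.Theory Num.Theory.
Local Open Scope classical_set_scope.
Local Open Scope ring_scope.

(* We model the algebraic closure of Q by algC (MathComp's countable
   algebraically closed field of characteristic 0, which is algebraic over Q). *)

Definition Qset : set algC := [set x | exists q : rat, x = ratr q].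

Definition is_number_field (K : set algC) : Prop :=
  [/\ K 1,
      (forall x y, K x -> K y -> K (x - y)),
      (forall x y, K x -> K y -> K (x * y)),
      (forall x, K x -> x != 0 -> K x^-1) &
      exists (n : nat) (b : 'I_n -> algC),
        K = [set x | exists q : 'I_n -> rat, x = \sum_(i < n) ratr (q i) * b i]].

Definition padic_val (p : nat) (r : rat) : int :=
  (logn p `|numq r|%N)%:Z - (logn p `|denq r|%N)%:Z.

Definition padic_abs (R : realType) (p : nat) (r : rat) : R :=
  if r == 0 then 0 else (p%:R : R) ^ (- padic_val p r).

(* [is_place_over K w p]: w is (the restriction to K of) the normalised
   absolute value ||.||_v of a non-Archimedean place v of K lying above the
   prime p, i.e. an absolute value on K extending the p-adic absolute value
   of Q.  By convention w vanishes outside K, so that a place of K is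
   represented by a unique function algC -> R. *)
Definition is_place_over (R : realType) (K : set algC) (w : algC -> R)
    (p : nat) : Prop :=
  prime p /\
  (forall x, ~ K x -> w x = 0) /\
  (forall x, K x -> 0 <= w x) /\
  (forall x, K x -> (w x = 0 <-> x = 0)) /\
  (forall x y, K x -> K y -> w (x * y) = w x * w y) /\
  (forall x y, K x -> K y -> w (x + y) <= Num.max (w x) (w y)) /\
  (forall q : rat, w (ratr q) = padic_abs R p q).

Definition places (R : realType) (K : set algC) : set (algC -> R) :=
  [set w | exists p, is_place_over K w p].

Definition prime_below (R : realType) (K : set algC) (v : algC -> R) : nat :=
  xget 0%N [set p | is_place_over K v p].

Definition restrict (R : realType) (K : set algC) (w : algC -> R) : algC -> R :=
  fun x => if pselect (K x) then w x else 0.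

(* A map c : J -> Q, J = pairs (K, v) with K a number field and v a
   non-Archimedean place of K; c is only ever evaluated on such pairs. *)
Definition consistent (R : realType) (c : set algC -> (algC -> R) -> rat) : Prop :=
  forall (K L : set algC), is_number_field K -> is_number_field L -> K `<=` L ->
  forall v, @places R K v ->
    c K v = \sum_(w \in [set w | @places R L w /\ restrict K w = v]) c L w.

Definition PhiK (R : realType) (c : set algC -> (algC -> R) -> rat)
    (K : set algC) (a : algC) : R :=
  \sum_(v \in @places R K) (ratr (c K v) / ln ((prime_below K v)%:R : R) * ln (v a)).

Definition Qgen (a : algC) : set algC :=
  [set x | exists P : {poly rat}, x = (map_poly ratr P).[a]].

(* Phi_c o pi : algC^x -> R, computed in the number field K = Q(a)
   (pi(a) lies in H_{Q(a)} subset S_{Q(a)}). *)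
Definition Phi_pi (R : realType) (c : set algC -> (algC -> R) -> rat)
    (a : algC) : R :=
  PhiK c (Qgen a) a.

(* Omega : Q^x -> Z, the homomorphism with Omega(p) = 1, Omega(-1) = 0:
   the number of prime factors counted with multiplicity. *)
Definition bigomega (n : nat) : nat := \sum_(p <- primes n) logn p n.

Definition Omega (r : rat) : int :=
  (bigomega `|numq r|%N)%:Z - (bigomega `|denq r|%N)%:Z.

(* Main.v *)
Require Import Defs.
From HB Require Import structures.
From mathcomp Require Import all_boot all_order all_algebra.
From mathcomp Require Import algC.
From mathcomp Require Import all_classical all_reals.
From mathcomp Require Import exp.
From mathcomp Require Import zify ring lra.
Import Order.TTheory GRing.Theory Num.Theory.
Local Open Scope classical_set_scope.
Local Open Scope ring_scope.

Lemma val_frac p (n d : int) : n != 0 -> d != 0 ->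
  padic_val p (n%:~R / d%:~R) = (logn p `|n|)%:Z - (logn p `|d|)%:Z.
Proof.
move=> n0 d0; set q : rat := n%:~R / d%:~R.
have q0 : q != 0 by rewrite mulf_neq0 ?invr_eq0 ?intr_eq0.
have E : numq q * d = n * denq q.
  apply: (@intr_inj rat); rewrite !intrM numqE /q.
  by field; rewrite intr_eq0.
have E2 : (`|numq q| * `|d| = `|n| * `|denq q|)%N by rewrite -!abszM E.
have h1 : (0 < `|numq q|)%N by rewrite absz_gt0 numq_eq0.
have h2 : (0 < `|d|)%N by rewrite absz_gt0.
have h3 : (0 < `|n|)%N by rewrite absz_gt0.
have h4 : (0 < `|denq q|)%N by rewrite absz_gt0 gt_eqF // denq_gt0.
have := congr1 (logn p) E2; rewrite !lognM // => E3.
rewrite /padic_val; lia.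
Qed.

Lemma val_def p q : q != 0 -> padic_val p q = (logn p `|numq q|)%:Z - (logn p `|denq q|)%:Z.
Proof. by []. Qed.

Lemma denq_neq0 (q : rat) : denq q != 0.
Proof. by rewrite gt_eqF // denq_gt0. Qed.

Lemma val_mul p q1 q2 : q1 != 0 -> q2 != 0 ->
  padic_val p (q1 * q2) = padic_val p q1 + padic_val p q2.
Proof.
move=> h1 h2.
have -> : q1 * q2 = (numq q1 * numq q2)%:~R / (denq q1 * denq q2)%:~R.
  rewrite -{1}(divq_num_den q1) -{1}(divq_num_den q2) !intrM.
  by field; rewrite !intr_eq0 !denq_neq0.
rewrite val_frac ?mulf_neq0 ?numq_eq0 ?denq_neq0 // !abszM.
have a1 : (0 < `|numq q1|)%N by rewrite absz_gt0 numq_eq0.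
have a2 : (0 < `|numq q2|)%N by rewrite absz_gt0 numq_eq0.
have a3 : (0 < `|denq q1|)%N by rewrite absz_gt0 denq_neq0.
have a4 : (0 < `|denq q2|)%N by rewrite absz_gt0 denq_neq0.
rewrite !lognM // /padic_val; lia.
Qed.

Lemma logn_dvd_add p (a b : int) k : prime p -> a + b != 0 ->
  (k <= logn p `|a|)%N -> (k <= logn p `|b|)%N -> (k <= logn p `|(a + b)%R|)%N.
Proof.
move=> pp ab0 ha hb.
have dv (x : int) : (k <= logn p `|x|)%N -> ((p ^ k)%N%:Z %| x)%Z.
  move=> hx; rewrite dvdzE /=.
  apply: dvdn_trans (pfactor_dvdnn p _).
  by rewrite dvdn_exp2l.
have := rpredD (dv _ ha) (dv _ hb); rewrite dvdzE /= pfactor_dvdn //.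
by rewrite absz_gt0.
Qed.

Lemma val_add p q1 q2 : prime p -> q1 != 0 -> q2 != 0 -> q1 + q2 != 0 ->
  padic_val p q1 <= padic_val p (q1 + q2) \/ padic_val p q2 <= padic_val p (q1 + q2).
Proof.
move=> pp h1 h2 h3.
set a := numq q1 * denq q2; set b := numq q2 * denq q1; set D := denq q1 * denq q2.
have D0 : D != 0 by rewrite mulf_neq0 ?denq_neq0.
have a0 : a != 0 by rewrite mulf_neq0 ?denq_neq0 ?numq_eq0.
have b0 : b != 0 by rewrite mulf_neq0 ?denq_neq0 ?numq_eq0.
have e1 : q1 = a%:~R / D%:~R.
  rewrite /a /D -{1}(divq_num_den q1) !intrM.
  by field; rewrite !intr_eq0 !denq_neq0.
have e2 : q2 = b%:~R / D%:~R.
  rewrite /b /D -{1}(divq_num_den q2) !intrM.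
  by field; rewrite !intr_eq0 !denq_neq0.
have e3 : q1 + q2 = (a + b)%:~R / D%:~R by rewrite e1 e2 intrD mulrDl.
have ab0 : a + b != 0.
  by apply: contra h3; rewrite e3 => /eqP ->; rewrite mul0r.
rewrite e3 {1}e1 {1}e2 !val_frac //.
case: (leqP (logn p `|a|) (logn p `|b|)) => hab.
  left; have := @logn_dvd_add p a b _ pp ab0 (leqnn _) hab; by move=> H; rewrite lerD2r lez_nat.
right; have := @logn_dvd_add p a b _ pp ab0 (ltnW hab) (leqnn _); by move=> H; rewrite lerD2r lez_nat.
Qed.

Section Abs.
Variable R : realType.

Lemma lnz (x : R) (z : int) : 0 < x -> ln (x ^ z) = z%:~R * ln x.
Proof.
move=> x0; case: z => n.
  by rewrite /= lnXn // mulr_natl.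
rewrite NegzE -invr_expz /= lnV ?posrE ?exprn_gt0 // lnXn //.
by rewrite mulNr mulr_natl.
Qed.

Lemma pabs0 p : padic_abs R p 0 = 0.
Proof. by rewrite /padic_abs eqxx. Qed.

Lemma pabsE p q : q != 0 -> padic_abs R p q = (p%:R : R) ^ (- padic_val p q).
Proof. by move=> q0; rewrite /padic_abs (negbTE q0). Qed.

Lemma Pgt1 p : prime p -> 1 < (p%:R : R).
Proof. by move=> pp; rewrite ltr1n prime_gt1. Qed.

Lemma Pgt0 p : prime p -> 0 < (p%:R : R).
Proof. by move=> pp; rewrite ltr0n prime_gt0. Qed.

Lemma pabs_ge0 p q : prime p -> 0 <= padic_abs R p q.
Proof.
move=> pp; have [->|q0] := eqVneq q 0; first by rewrite pabs0.
by rewrite pabsE // exprz_ge0 // ltW // Pgt0.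
Qed.

Lemma pabs_eq0 p q : prime p -> (padic_abs R p q = 0 <-> q = 0).
Proof.
move=> pp; split; last by move=> ->; rewrite pabs0.
have [->//|q0] := eqVneq q 0.
by rewrite pabsE // => /eqP; rewrite gt_eqF // exprz_gt0 // Pgt0.
Qed.

Lemma pabs_mul p q1 q2 : prime p ->
  padic_abs R p (q1 * q2) = padic_abs R p q1 * padic_abs R p q2.
Proof.
move=> pp.
have [->|h1] := eqVneq q1 0; first by rewrite mul0r !pabs0 mul0r.
have [->|h2] := eqVneq q2 0; first by rewrite mulr0 !pabs0 mulr0.
rewrite !pabsE ?mulf_neq0 // val_mul // opprD exprzDr //.
by rewrite unitfE gt_eqF // Pgt0.
Qed.

Lemma pabs_add p q1 q2 : prime p ->
  padic_abs R p (q1 + q2) <= Num.max (padic_abs R p q1) (padic_abs R p q2).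
Proof.
move=> pp.
have [->|h1] := eqVneq q1 0; first by rewrite add0r pabs0 le_max lexx orbT.
have [->|h2] := eqVneq q2 0; first by rewrite addr0 pabs0 le_max lexx.
have [->|h3] := eqVneq (q1 + q2) 0.
  by rewrite pabs0 le_max pabs_ge0.
rewrite !pabsE // le_max.
have mono (m n : int) : m <= n -> (p%:R : R) ^ (- n) <= (p%:R : R) ^ (- m).
  by move=> mn; apply: ler_weXz2l; [apply: ltW; apply: Pgt1 | rewrite lerN2].
by case: (@val_add p q1 q2 pp h1 h2 h3) => h; apply/orP; [left|right]; exact: mono.
Qed.

Definition wfun p : algC -> R :=
  fun x => if pselect (Qset x) then padic_abs R p (getCrat x) else 0.

Lemma wfun_rat p q : wfun p (ratr q) = padic_abs R p q.
Proof.
rewrite /wfun; destruct (pselect (Qset (ratr q))) as [h0|h]; first by rewrite ratCK.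
by case: h; exists q.
Qed.

Lemma wfun_out p x : ~ Qset x -> wfun p x = 0.
Proof. by move=> h; rewrite /wfun; destruct (pselect (Qset x)). Qed.

Lemma wfun_place p : prime p -> is_place_over Qset (wfun p) p.
Proof.
move=> pp; split=> //; split; first exact: wfun_out.
split; first by move=> _ [q ->]; rewrite wfun_rat pabs_ge0.
split.
  move=> _ [q ->]; rewrite wfun_rat pabs_eq0 //.
  by split=> [->|/eqP]; [rewrite rmorph0 | rewrite fmorph_eq0 => /eqP].
split; first by move=> _ _ [a ->] [b ->]; rewrite -rmorphM !wfun_rat pabs_mul.
split; first by move=> _ _ [a ->] [b ->]; rewrite -rmorphD !wfun_rat pabs_add.
exact: wfun_rat.
Qed.

Lemma place_eq (w : algC -> R) p : is_place_over Qset w p -> w = wfun p.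
Proof.
move=> [_ [hout [_ [_ [_ [_ hrat]]]]]].
apply: funext => x; have [[q ->]|nq] := pselect (Qset x).
  by rewrite wfun_rat hrat.
by rewrite wfun_out // hout.
Qed.

Lemma val_nat p n : (0 < n)%N -> padic_val p (n%:Z)%:Q = logn p n.
Proof. by move=> n0; rewrite /padic_val numq_int denq_int /= logn1 subr0. Qed.

Lemma place_unique (w : algC -> R) p p' :
  is_place_over Qset w p -> is_place_over Qset w p' -> p = p'.
Proof.
move=> h h'; have pp := h.1; have pp' := h'.1.
move: (@place_eq w p h) (@place_eq w p' h') => e1 e2.
have := congr1 (fun f => f (ratr (p%:Z)%:Q)) (etrans (esym e1) e2).
rewrite /= !wfun_rat !pabsE ?intr_eq0 -?lt0n ?prime_gt0 // !val_nat ?prime_gt0 //.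
rewrite logn_prime // eqxx logn_prime //.
case: eqP => [//|_] /=; rewrite expr0z.
move=> /eqP; rewrite -invr_expz expr1z => /eqP /(congr1 (fun x => x^-1)).
rewrite invrK invr1 => /eqP; rewrite pnatr_eq1 => /eqP p1.
by move: (prime_gt1 pp); rewrite p1.
Qed.

Lemma prime_below_wfun p : prime p -> prime_below Qset (wfun p) = p.
Proof.
move=> pp; apply: xget_unique; first exact: wfun_place.
by move=> y hy; apply: esym; apply: (@place_unique (wfun p) p y (@wfun_place p pp) hy).
Qed.

End Abs.

Lemma Qgen_rat r : Qgen (ratr r) = Qset.
Proof.
apply/seteqP; split => x.
  by move=> [P ->]; exists P.[r]; rewrite horner_map.
by move=> [q ->]; exists q%:P; rewrite map_polyC hornerC.
Qed.

Lemma logn_out p n d : (0 < n)%N -> (0 < d)%N -> p \notin primes (n * d) ->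
  logn p n = 0%N /\ logn p d = 0%N.
Proof.
move=> n0 d0 np; split; apply/eqP; rewrite -leqn0 leqNgt logn_gt0;
  apply: contra np; rewrite !mem_primes muln_gt0 n0 d0 /= => /andP[-> /= dv].
  by rewrite dvdn_mulr.
by rewrite dvdn_mull.
Qed.

Lemma Phi_formula (R : realType) c r : r != 0 ->
  Phi_pi c (ratr r) = \sum_(p <- primes (`|numq r| * `|denq r|))
     (- ratr (c Qset (wfun R p)) * (padic_val p r)%:~R).
Proof.
move=> r0; rewrite /Phi_pi Qgen_rat /PhiK.
have n0 : (0 < `|numq r|)%N by rewrite absz_gt0 numq_eq0.
have d0 : (0 < `|denq r|)%N by rewrite absz_gt0 denq_neq0.
set S := primes _.
have primeS p : p \in S -> prime p by rewrite mem_primes => /andP[].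
have inj : {in S &, injective (wfun R)}.
  move=> p1 p2 h1 h2 e.
  by apply: (@place_unique R (wfun R p1) p1 p2 (@wfun_place R p1 (primeS _ h1)));
    rewrite e; apply: wfun_place; apply: primeS.
rewrite -(fsbig_widen [set` map (wfun R) S]).
- rewrite -fsbig_seq; last by rewrite map_inj_in_uniq ?primes_uniq. rewrite (big_map (wfun R) xpredT (fun a => ratr (c Qset a) / ln (prime_below Qset a)%:R * ln (a (ratr r)))).

  apply: eq_big_seq => p pS; have pp := primeS p pS.
  rewrite prime_below_wfun // wfun_rat pabsE // lnz ?Pgt0 //.
  have : ln (p%:R : R) != 0 by rewrite gt_eqF // ln_gt0 // Pgt1.
  move=> l0; rewrite intrN; field; exact: l0.
- move=> v /= /mapP [p pS ->]; exists p; apply: wfun_place; exact: primeS.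
move=> v [[p hp] nv]; rewrite (@place_eq R v p hp) in nv *.
have pnS : p \notin S by apply/negP => pS; apply: nv; apply: map_f.
have [e1 e2] := @logn_out p _ _ n0 d0 pnS.
rewrite /= wfun_rat pabsE // /padic_val e1 e2 subrr oppr0 expr0z ln1 mulr0.
by [].
Qed.

Lemma bigomega_seq n (s : seq nat) : (0 < n)%N -> uniq s -> {subset primes n <= s} ->
  (\sum_(p <- s) logn p n)%N = bigomega n.
Proof.
move=> n0 us sub; rewrite /bigomega.
rewrite (bigID (fun p => p \in primes n)) /= [X in (_ + X)%N]big1 ?addn0; last first.
  by move=> p pn; apply/eqP; rewrite -leqn0 leqNgt logn_gt0.
rewrite -big_filter; apply: perm_big; apply: uniq_perm.
- exact: filter_uniq.
- exact: primes_uniq.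
by move=> p; rewrite mem_filter; case pn: (p \in primes n); rewrite ?(sub _ pn).
Qed.

Lemma sumPosz (s : seq nat) (F : nat -> nat) :
  \sum_(p <- s) (F p)%:Z = (\sum_(p <- s) F p)%N%:Z.
Proof. by rewrite (big_morph Posz PoszD (erefl (Posz 0))). Qed.

Theorem theorem2p1 (R : realType) (c : set algC -> (algC -> R) -> rat) :
  consistent c ->
  ((forall r : rat, r != 0 -> Phi_pi c (ratr r) = (Omega r)%:~R) <->
   (forall v : algC -> R, @places R Qset v -> c Qset v = -1)).
Proof.
move=> _; split.
- move=> H v [p0 hp]; have pp := hp.1; rewrite (@place_eq R v p0 hp).
  have r0 : (p0%:Z)%:Q != 0 by rewrite intr_eq0 -lt0n prime_gt0.
  have := H _ r0; rewrite Phi_formula // numq_int denq_int /= muln1.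
  rewrite primes_prime // big_seq1 val_nat ?prime_gt0 // logn_prime // eqxx.
  rewrite /Omega numq_int denq_int /bigomega /= primes_prime // big_seq1.
  rewrite logn_prime // eqxx (_ : primes 1 = [::]) // big_nil subr0 mulr1.
  move=> /eqP; rewrite eqr_oppLR => /eqP e.
  apply: (@fmorph_inj _ _ (@ratr R)); rewrite rmorphN rmorph1; exact: e.
move=> H r r0; rewrite Phi_formula //.
have n0 : (0 < `|numq r|)%N by rewrite absz_gt0 numq_eq0.
have d0 : (0 < `|denq r|)%N by rewrite absz_gt0 denq_neq0.
set S := primes _.
have primeS p : p \in S -> prime p by rewrite mem_primes => /andP[].
under eq_big_seq => p pS.
  rewrite H; last by exists p; apply: wfun_place; apply: primeS.
  rewrite rmorphN rmorph1 opprK mul1r.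
  over.
rewrite -rmorph_sum; congr (_%:~R).
rewrite /padic_val sumrB !sumPosz /Omega.
rewrite (@bigomega_seq _ S n0 (primes_uniq _)); last first.
  by move=> p; rewrite !mem_primes muln_gt0 n0 d0 /= => /andP[-> /dvdn_mulr ->].
rewrite (@bigomega_seq _ S d0 (primes_uniq _)) //.
by move=> p; rewrite !mem_primes muln_gt0 n0 d0 /= => /andP[-> /dvdn_mull ->].
Qed.
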